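(* For every $\bar x\in\mathcal{X}$, $$\operatorname{proj}_\theta(\widehat{\mathrm{SRI}}(\bar x))=\Big\{\theta\in\mathbb{R}^{V_+}_{\ge0}:\sum_{v\in V_+:w_v>0}\phi_v(\alpha,\beta)\theta_v\ge\sum_{\xi\in[N]}\sum_{\emptyset\ne S\subseteq V_+}\alpha^\xi_S\bar x(E(S))+\nu(\alpha,\beta)\ \ \forall(\alpha,\beta)\in\mathcal{A}\Big\}.$$ Consequently, $\mathcal{P}$ equals the set of $(x,\theta)\in\mathcal{X}\times\mathbb{R}^{V_+}_{\ge0}$ satisfying $\sum_{v:w_v>0}\phi_v(\alpha,\beta)\theta_v\ge\sum_\xi\sum_S\alpha^\xi_Sx(E(S))+\nu(\alpha,\beta)$ for all $(\alpha,\beta)\in\mathcal{A}$.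
   Context: $G=(V,E)$ complete undirected graph, $V=\{0\}\cup V_+$ ($V_+$ customers); capacity $C>0$; scenarios $\xi\in[N]$ with demands $d^\xi\in\mathbb{Q}^{V_+}_{\ge0}$ ($d^\xi(v)\le C$) and probabilities $p_\xi\ge0$, $\sum_\xi p_\xi=1$. $f(S)=\sum_{i\in S}f(i)$; $k_\xi(S)=\lceil d^\xi(S)/C\rceil$; $\bar d=\sum_\xi p_\xi d^\xi$; $E(S)$: edges with both ends in $S$; $\delta(S)$: edges with exactly one end in $S$. $\mathcal{X}$ is one of $\mathcal{X}_{\mathrm{sub}}=\{x\in[0,2]^E: x(\delta(v))=2\ \forall v\in V_+,\ x(E(S))\le|S|-1\ \forall\emptyset\ne S\subseteq V_+\}$ or $\mathcal{X}_{\mathrm{cvrp}}=\mathcal{X}_{\mathrm{sub}}\cap\{x:x(\delta(0))=2k,\ x(E(S))\le|S|-\lceil\bar d(S)/C\rceil\}$. Fixed $w\in\mathbb{Q}^{V_+}_{\ge0}$, $b\in\mathbb{Z}^{V_+}_{\ge0}$; $y\in\mathbb{R}^{[N]\times V_+}$ has entries $y^\xi_v$; $[\mathbf 0,b]^N=\{y:0\le y^\xi_v\le b_v\}$. For $\bar x\in\mathcal{X}$, $\widehat{\mathrm{SRI}}(\bar x)$ is the set of $(\theta,y)\in\mathbb{R}^{V_+}_{\ge0}\times[\mathbf 0,b]^N$ with $y^\xi(S)\ge k_\xi(S)+\bar x(E(S))-|S|$ for all $\emptyset\ne S\subseteq V_+$, $\xi\in[N]$, and $\theta_v\ge\sum_\xi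 p_\xi w_vy^\xi_v$ for all $v$; $\operatorname{proj}_\theta$ is projection onto $\theta$; $\mathcal{P}=\{(x,\theta):x\in\mathcal{X},\theta\in\operatorname{proj}_\theta(\widehat{\mathrm{SRI}}(x))\}$. Multipliers $\alpha=(\alpha^\xi_S)_{\xi,\emptyset\ne S\subseteq V_+}$, $\beta=(\beta^\xi_v)_{\xi,v}$. $\nu(\alpha,\beta)=\sum_\xi\sum_S\alpha^\xi_S(k_\xi(S)-|S|)+\sum_\xi\sum_v\beta^\xi_vb_v$. For $w_v>0$, $\phi_v(\alpha,\beta)=\big(\max_{\xi}\frac{\beta^\xi_v+\sum_{S\ni v}\alpha^\xi_S}{p_\xi w_v}\big)^+$ with $(a)^+=\max\{a,0\}$. $\mathcal{A}$ is the set of $(\alpha,\beta)$ with $\alpha\ge0$, $\beta\le0$, and $\beta^\xi_v+\sum_{S\ni v}\alpha^\xi_S\le0$ for all $\xi$ and all $v$ with $w_v=0$. *)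

(* Defs.v *)
(* Customers V_+ = 'I_n, vertex set V = option 'I_n with the
   depot 0 represented by None and customer v by Some v. *)
From HB Require Import structures.
From mathcomp Require Import all_boot all_order all_algebra.
From mathcomp Require Import reals.
Set Implicit Arguments. Unset Strict Implicit. Unset Printing Implicit Defensive.
Import Order.TTheory GRing.Theory Num.Theory.
Local Open Scope ring_scope.

Definition edge (n : nat) := {e : {set option 'I_n} | #|e| == 2%N}.

Section Defs.
Variable R : realType.
Variables n N : nat.

Definition xE (x : edge n -> R) (S : {set 'I_n}) : R :=
  \sum_(e : edge n | val e \subset Some @: S) x e.

Definition xdelta (x : edge n -> R) (T : {set option 'I_n}) : R :=
  \sum_(e : edge n | #|val e :&: T| == 1%N) x e.

Variables (d : 'I_N -> 'I_n -> rat) (p : 'I_N -> rat) (C : rat)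
          (w : 'I_n -> rat) (b : 'I_n -> nat).

Definition kxi (xi : 'I_N) (S : {set 'I_n}) : int :=
  Num.ceil ((\sum_(v in S) d xi v) / C).

Definition dbar (S : {set 'I_n}) : rat :=
  \sum_(xi < N) p xi * (\sum_(v in S) d xi v).

Definition X_sub (x : edge n -> R) : Prop :=
  [/\ forall e, 0 <= x e <= 2,
      forall v : 'I_n, xdelta x [set Some v] = 2 &
      forall S : {set 'I_n}, S != set0 -> xE x S <= #|S|%:R - 1].

(* k is the (fixed) number of vehicles *)
Definition X_cvrp (k : nat) (x : edge n -> R) : Prop :=
  [/\ X_sub x,
      xdelta x [set None] = 2 * k%:R &
      forall S : {set 'I_n}, S != set0 ->
        xE x S <= #|S|%:R - (Num.ceil (dbar S / C))%:~R].

Definition Xset (cvrp : option nat) (x : edge n -> R) : Prop :=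
  match cvrp with None => X_sub x | Some k => X_cvrp k x end.

Definition SRIhat (x : edge n -> R) (theta : 'I_n -> R) (y : 'I_N -> 'I_n -> R)
  : Prop :=
  [/\ forall v, 0 <= theta v,
      forall xi v, 0 <= y xi v <= (b v)%:R,
      forall xi (S : {set 'I_n}), S != set0 ->
        (kxi xi S)%:~R + xE x S - #|S|%:R <= \sum_(v in S) y xi v &
      forall v, \sum_(xi < N) ratr (p xi) * ratr (w v) * y xi v <= theta v].

Definition projSRI (x : edge n -> R) (theta : 'I_n -> R) : Prop :=
  exists y, SRIhat x theta y.

Definition Pset (cvrp : option nat) (x : edge n -> R) (theta : 'I_n -> R) : Prop :=
  Xset cvrp x /\ projSRI x theta.

Definition nu (alpha : 'I_N -> {set 'I_n} -> R) (beta : 'I_N -> 'I_n -> R) : R :=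
  \sum_(xi < N) \sum_(S : {set 'I_n} | S != set0)
      alpha xi S * ((kxi xi S)%:~R - #|S|%:R)
  + \sum_(xi < N) \sum_(v < n) beta xi v * (b v)%:R.

Definition posp (a : R) : R := Num.max a 0.

(* φ_v(α,β) = (max_ξ (β^ξ_v + Σ_{S∋v} α^ξ_S)/(p_ξ w_v))^+   (used for w_v > 0).
   Since N ≥ 1 (probabilities sum to 1), folding max with initial value 0
   followed by (.)^+ is exactly (max_ξ …)^+. *)
Definition phi (alpha : 'I_N -> {set 'I_n} -> R) (beta : 'I_N -> 'I_n -> R)
  (v : 'I_n) : R :=
  posp (\big[Num.max/0]_(xi < N)
          ((beta xi v + \sum_(S : {set 'I_n} | v \in S) alpha xi S)
             / (ratr (p xi) * ratr (w v)))).

Definition Aset (alpha : 'I_N -> {set 'I_n} -> R) (beta : 'I_N -> 'I_n -> R)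
  : Prop :=
  [/\ forall xi (S : {set 'I_n}), S != set0 -> 0 <= alpha xi S,
      forall xi v, beta xi v <= 0 &
      forall xi v, w v = 0 ->
        beta xi v + \sum_(S : {set 'I_n} | v \in S) alpha xi S <= 0].

Definition ineq (x : edge n -> R) (theta : 'I_n -> R)
  (alpha : 'I_N -> {set 'I_n} -> R) (beta : 'I_N -> 'I_n -> R) : Prop :=
  \sum_(xi < N) \sum_(S : {set 'I_n} | S != set0) alpha xi S * xE x S
    + nu alpha beta
  <= \sum_(v < n | 0 < w v) phi alpha beta v * theta v.

End Defs.

(* Main.v *)
Require Import Defs.
From HB Require Import structures.
From mathcomp Require Import all_boot all_order all_algebra.
From mathcomp Require Import reals.
From mathcomp Require Import ring lra.
Import Order.TTheory GRing.Theory Num.Theory.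
Local Open Scope ring_scope.

Section Farkas.
Variable R : realFieldType.

Lemma sum_delta (I : finType) (i : I) (F : I -> R) :
  \sum_k (k == i)%:R * F k = F i.
Proof.
rewrite (bigD1 i) //= eqxx mul1r big1 ?addr0 // => k /negbTE ->; exact: mul0r.
Qed.

Lemma sum_delta2 (I : finType) (i j : I) (u v : R) (F : I -> R) :
  \sum_k ((k == i)%:R * u + (k == j)%:R * v) * F k = u * F i + v * F j.
Proof.
under eq_bigr => k _ do rewrite mulrDl -!mulrA.
by rewrite big_split /= !sum_delta.
Qed.

Lemma sum_delta_s (I : finType) (s : R) (i : I) (F : I -> R) :
  \sum_k s * (k == i)%:R * F k = s * F i.
Proof. under eq_bigr => k _ do rewrite -mulrA. by rewrite -mulr_sumr sum_delta. Qed.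

Lemma sum_delta2_s (I : finType) (s : R) (i j : I) (u v : R) (F : I -> R) :
  \sum_k s * ((k == i)%:R * u + (k == j)%:R * v) * F k = s * (u * F i + v * F j).
Proof. under eq_bigr => k _ do rewrite -mulrA. by rewrite -mulr_sumr sum_delta2. Qed.

Lemma between (I : finType) (P Q : pred I) (f g : I -> R) :
  (forall i j, P i -> Q j -> f i <= g j) ->
  exists y, (forall i, P i -> f i <= y) /\ (forall j, Q j -> y <= g j).
Proof.
move=> H.
case: (pickP P) => [i0 Pi0|P0].
  exists (\big[Num.max/f i0]_(i | P i) f i); split.
    move=> i Pi; by rewrite (bigD1 i) //= le_max lexx.
  move=> j Qj; elim/big_ind: _ => [|x y hx hy|i Pi]; first exact: H.
    by rewrite ge_max hx hy.
  exact: H.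
case: (pickP Q) => [j0 Qj0|Q0].
  exists (\big[Num.min/g j0]_(j | Q j) g j); split.
    move=> i; by rewrite P0.
  move=> j Qj; by rewrite (bigD1 j) //= ge_min lexx.
exists 0; split => i; [by rewrite P0 | by rewrite Q0].
Qed.

Lemma farkas_ord (m : nat) : forall (I : finType) (A : I -> 'I_m -> R) (c : I -> R),
  (forall l : I -> R, (forall i, 0 <= l i) ->
     (forall j, \sum_i l i * A i j = 0) -> 0 <= \sum_i l i * c i) ->
  exists y : 'I_m -> R, forall i, \sum_j A i j * y j <= c i.
Proof.
elim: m => [|m IH] I A c H.
  exists (fun _ => 0) => i; rewrite big_ord0.
  have := H (fun k => (k == i)%:R); rewrite sum_delta; apply.
    by move=> k; rewrite ler0n.
  by case.
pose a i := A i ord0.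
pose mu (r : (I + I * I)%type) (k : I) : R :=
  match r with
  | inl i => (a i == 0)%:R * (k == i)%:R
  | inr (i, j) => ((0 < a i) && (a j < 0))%:R * ((k == i)%:R * - a j + (k == j)%:R * a i)
  end.
have mu_ge0 r k : 0 <= mu r k.
  case: r => [i|[i j]] /=; first by rewrite mulr_ge0 ?ler0n.
  case: (boolP ((0 < a i) && (a j < 0))) => [/andP[hi hj]|_]; last by rewrite mul0r.
  rewrite mul1r addr_ge0 // mulr_ge0 ?ler0n //; [lra | exact: ltW].
have mu_a r : \sum_k mu r k * a k = 0.
  case: r => [i|[i j]] /=.
    under eq_bigr => k _ do rewrite -mulrA.
    rewrite -mulr_sumr sum_delta.
    by case: eqP => [->|]; rewrite ?mulr0 ?mul0r.
  under eq_bigr => k _ do rewrite -mulrA.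
  rewrite -mulr_sumr sum_delta2.
  by rewrite mulNr [a i * a j]mulrC addNr mulr0.
pose A' r (j : 'I_m) := \sum_k mu r k * A k (lift ord0 j).
pose c' r := \sum_k mu r k * c k.
have [y' Hy'] : exists y' : 'I_m -> R, forall r, \sum_j A' r j * y' j <= c' r.
  apply: IH => l' l'0 hcol.
  pose l k := \sum_r l' r * mu r k.
  have ex F : \sum_k l k * F k = \sum_r l' r * \sum_k mu r k * F k.
    rewrite /l; under eq_bigr => k _ do rewrite mulr_suml.
    rewrite exchange_big /=; apply: eq_bigr => r _.
    by rewrite mulr_sumr; apply: eq_bigr => k _; rewrite mulrA.
  have := H l; rewrite ex; apply.
    by move=> k; apply: sumr_ge0 => r _; rewrite mulr_ge0.
  move=> j; rewrite ex; case: (unliftP ord0 j) => [j'|] ->.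
    exact: hcol.
  by rewrite big1 // => r _; rewrite mu_a mulr0.
pose e i := c i - \sum_j A i (lift ord0 j) * y' j.
have rowZ i : a i = 0 -> 0 <= e i.
  move=> ai0; have := Hy' (inl i).
  rewrite /A' /c' /mu /=.
  under eq_bigr => j _ do rewrite sum_delta_s ai0 eqxx mul1r.
  rewrite sum_delta_s ai0 eqxx mul1r.
  rewrite /e; lra.
have rowPN i j : 0 < a i -> a j < 0 -> 0 <= - a j * e i + a i * e j.
  move=> hi hj; have := Hy' (inr (i, j)).
  rewrite /A' /c' /mu /=.
  under eq_bigr => j' _ do rewrite sum_delta2_s hi hj mul1r mulrDl -!mulrA.
  rewrite sum_delta2_s hi hj mul1r.
  rewrite big_split /= -!mulr_sumr /e; lra.
have hb : forall j i, a j < 0 -> 0 < a i -> e j / a j <= e i / a i.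
  move=> j i hj hi /=.
  have := rowPN i j hi hj.
  rewrite ler_ndivrMr // mulrAC ler_pdivrMr //; nra.
have [y0 [Hlo Hup]] := @between I (fun j => a j < 0) (fun i => 0 < a i)
   (fun j => e j / a j) (fun i => e i / a i) hb.
exists (fun j => if unlift ord0 j is Some j' then y' j' else y0) => i.
rewrite big_ord_recl /= unlift_none.
under eq_bigr => j _ do rewrite liftK.
have : a i * y0 <= e i.
  case: (ltrgtP (a i) 0) => hai.
  - by have := Hlo i hai; rewrite /= ler_ndivrMr // mulrC.
  - by have := Hup i hai; rewrite /= ler_pdivlMr // mulrC.
  - by rewrite hai mul0r; exact: rowZ.
rewrite /e /a; lra.
Qed.

Lemma farkas (J I : finType) (A : I -> J -> R) (c : I -> R) :
  (forall l : I -> R, (forall i, 0 <= l i) ->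
     (forall j, \sum_i l i * A i j = 0) -> 0 <= \sum_i l i * c i) ->
  exists y : J -> R, forall i, \sum_j A i j * y j <= c i.
Proof.
move=> H.
have [y' Hy'] : exists y' : 'I_#|J| -> R, forall i, \sum_k A i (enum_val k) * y' k <= c i.
  apply: farkas_ord => l l0 hc; apply: (H l l0) => j; have := hc (enum_rank j).
  by rewrite enum_rankK.
exists (fun j => y' (enum_rank j)) => i.
rewrite (reindex (@enum_val J predT)) /=; last exact: onW_bij (enum_val_bij J).
under eq_bigr => k _ do rewrite enum_valK.
exact: Hy'.
Qed.

End Farkas.

Section Main.
Variable R : realType.
Variables n N : nat.
Variables (d : 'I_N -> 'I_n -> rat) (p : 'I_N -> rat) (C : rat)
          (w : 'I_n -> rat) (b : 'I_n -> nat).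
Hypothesis hp : forall xi, 0 < p xi.
Hypothesis hw : forall v, 0 <= w v.

Lemma exch_S (alpha : {set 'I_n} -> R) (y : 'I_n -> R) :
  \sum_(S : {set 'I_n} | S != set0) alpha S * (\sum_(v in S) y v) =
  \sum_v (\sum_(S : {set 'I_n} | v \in S) alpha S) * y v.
Proof.
rewrite big_mkcond /=.
rewrite (eq_bigr (fun S : {set 'I_n} => \sum_v (if v \in S then alpha S * y v else 0))); last first.
  move=> S _; case: eqP => [->|_]; first by rewrite big_set0 mulr0 big1 // => v; rewrite in_set0.
  by rewrite mulr_sumr big_mkcond.
rewrite exchange_big /=; apply: eq_bigr => v _.
by rewrite mulr_suml [RHS]big_mkcond.
Qed.

Lemma weak (x : edge n -> R) theta y alpha beta :
  SRIhat d p C w b x theta y -> Aset w alpha beta ->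
  ineq d p C w b x theta alpha beta.
Proof.
move=> [th0 yb ycov yth] [a0 b0 bw].
rewrite /ineq /nu.
set K := fun xi S => ((kxi d C xi S)%:~R : R).
have step1 : \sum_(xi < N) \sum_(S : {set 'I_n} | S != set0) alpha xi S * xE x S +
  (\sum_(xi < N) \sum_(S : {set 'I_n} | S != set0) alpha xi S * (K xi S - #|S|%:R) +
   \sum_(xi < N) \sum_(v < n) beta xi v * (b v)%:R) <=
  \sum_(xi < N) (\sum_(S : {set 'I_n} | S != set0) alpha xi S * (\sum_(v in S) y xi v)
     + \sum_(v < n) beta xi v * y xi v).
  rewrite addrA -!big_split /=; apply: ler_sum => xi _.
  rewrite -big_split /=; apply: lerD; apply: ler_sum => S hS.
    rewrite -mulrDr; apply: ler_wpM2l; first exact: a0.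
    have := ycov xi S hS; rewrite /K; lra.
  apply: ler_wnM2l => //; by case/andP: (yb xi S).
apply: (le_trans step1).
under eq_bigr => xi _ do rewrite exch_S -big_split /=.
rewrite exchange_big /= [X in _ <= X]big_mkcond /=; apply: ler_sum => v _.
case: ifP => hwv.
  apply: (@le_trans _ _ (\sum_xi phi p w alpha beta v * (ratr (p xi) * ratr (w v) * y xi v))).
    apply: ler_sum => xi _; rewrite -mulrDl mulrA; apply: ler_wpM2r.
      by case/andP: (yb xi v).
    have hpw : 0 < ratr (p xi) * ratr (w v) :> R by rewrite mulr_gt0 // ltr0q.
    rewrite -ler_pdivrMr // /phi /posp le_max; apply/orP; left.
    by rewrite (bigD1 xi) //= le_max addrC lexx.
  rewrite -mulr_sumr; apply: ler_wpM2l; last exact: yth.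
  by rewrite /phi /posp le_max lexx orbT.
have w0 : w v = 0.
  by apply/eqP; rewrite eq_le hw andbT leNgt hwv.
apply: sumr_le0 => xi _; rewrite -mulrDl; apply: mulr_le0_ge0.
  by rewrite addrC; apply: bw.
by case/andP: (yb xi v).
Qed.

Lemma sum_pair (I1 I2 : finType) (F : I1 * I2 -> R) :
  \sum_j F j = \sum_i \sum_k F (i, k).
Proof. by rewrite pair_bigA; apply: eq_bigr => -[i k]. Qed.

Lemma sum_deltaR (I : finType) (i : I) (F : I -> R) :
  \sum_k (i == k)%:R * F k = F i.
Proof. under eq_bigr => k _ do rewrite eq_sym. exact: sum_delta. Qed.

Definition Jt := ('I_N * 'I_n)%type.
Definition Ix := ((Jt + Jt) + (('I_N * {set 'I_n}) + 'I_n))%type.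

Definition Amat (r : Ix) (j : Jt) : R :=
  match r with
  | inl (inl k) => - (k == j)%:R
  | inl (inr k) => (k == j)%:R
  | inr (inl (xi, T)) => - ((xi == j.1) && (j.2 \in T))%:R
  | inr (inr v) => (v == j.2)%:R * (ratr (p j.1) * ratr (w j.2))
  end.

Definition cvec (x : edge n -> R) (theta : 'I_n -> R) (r : Ix) : R :=
  match r with
  | inl (inl _) => 0
  | inl (inr k) => (b k.2)%:R
  | inr (inl (xi, T)) => if T != set0 then
       - ((kxi d C xi T)%:~R + xE x T - #|T|%:R) else 0
  | inr (inr v) => theta v
  end.

Lemma row_low k (y : Jt -> R) : \sum_j Amat (inl (inl k)) j * y j = - y k.
Proof. rewrite /=; under eq_bigr => j _ do rewrite mulNr. by rewrite sumrN sum_deltaR. Qed.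

Lemma row_up k (y : Jt -> R) : \sum_j Amat (inl (inr k)) j * y j = y k.
Proof. exact: sum_deltaR. Qed.

Lemma row_cov xi S (y : Jt -> R) :
  \sum_j Amat (inr (inl (xi, S))) j * y j = - \sum_(v in S) y (xi, v).
Proof.
rewrite sum_pair /= (bigD1 xi) //= [X in _ + X]big1 ?addr0; last first.
  move=> xi' hxi; apply: big1 => v _; by rewrite eq_sym (negbTE hxi) /= mulr0n oppr0 mul0r.
rewrite -sumrN [RHS]big_mkcond /=; apply: eq_bigr => v _; rewrite eqxx /=.
by case: (v \in S); rewrite ?mulN1r ?oppr0 ?mul0r.
Qed.

Lemma row_th v (y : Jt -> R) :
  \sum_j Amat (inr (inr v)) j * y j = \sum_xi ratr (p xi) * ratr (w v) * y (xi, v).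
Proof.
rewrite sum_pair; apply: eq_bigr => xi _ /=.
under eq_bigr => k _ do rewrite -mulrA.
by rewrite sum_deltaR mulrA.
Qed.


Lemma sum_deltaL (I : finType) (i : I) (F : I -> R) :
  \sum_k F k * (k == i)%:R = F i.
Proof. under eq_bigr => k _ do rewrite mulrC. exact: sum_delta. Qed.

Lemma col (l : Ix -> R) xi v :
  \sum_r l r * Amat r (xi, v) =
  - l (inl (inl (xi, v))) + l (inl (inr (xi, v)))
  - \sum_(S : {set 'I_n} | v \in S) l (inr (inl (xi, S)))
  + l (inr (inr v)) * (ratr (p xi) * ratr (w v)).
Proof.
rewrite !big_sumType /=.
have e1 : \sum_(k : Jt) l (inl (inl k)) * - (k == (xi, v))%:R = - l (inl (inl (xi, v))).
  under eq_bigr => k _ do rewrite mulrN.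
  by rewrite sumrN sum_deltaL.
have e2 : \sum_(k : Jt) l (inl (inr k)) * (k == (xi, v))%:R = l (inl (inr (xi, v))).
  exact: sum_deltaL.
have e4 : \sum_(v' < n) l (inr (inr v')) * ((v' == v)%:R * (ratr (p xi) * ratr (w v)))
   = l (inr (inr v)) * (ratr (p xi) * ratr (w v)).
  rewrite (eq_bigr (fun k => l (inr (inr k)) * (k == v)%:R * (ratr (p xi) * ratr (w v)))); last by move=> k _; exact: mulrA.
  by rewrite -mulr_suml sum_deltaL.
have e3 : \sum_(q : 'I_N * {set 'I_n}) l (inr (inl q)) * Amat (inr (inl q)) (xi, v)
   = - \sum_(S : {set 'I_n} | v \in S) l (inr (inl (xi, S))).
  rewrite sum_pair /= (bigD1 xi) //= [X in _ + X]big1 ?addr0; last first.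
    move=> xi' hxi; apply: big1 => S _; by rewrite (negbTE hxi) /= mulr0n oppr0 mulr0.
  rewrite -sumrN [RHS]big_mkcond /=; apply: eq_bigr => S _; rewrite eqxx /=.
  by case: (v \in S); rewrite ?mulrN1 ?oppr0 ?mulr0.
by rewrite e1 e2 e3 e4 !addrA.
Qed.

Lemma strong (x : edge n -> R) theta :
  (forall v, 0 <= theta v) ->
  (forall alpha beta, Aset w alpha beta -> ineq d p C w b x theta alpha beta) ->
  projSRI d p C w b x theta.
Proof.
move=> th0 Hineq.
have hcert : forall l : Ix -> R, (forall i, 0 <= l i) ->
    (forall j, \sum_i l i * Amat i j = 0) -> 0 <= \sum_i l i * cvec x theta i.
  move=> l l0 hcol.
  pose alpha xi S := l (inr (inl (xi, S))).
  pose beta xi v := - l (inl (inr (xi, v))).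
  pose lt v := l (inr (inr v)).
  have hA : Aset w alpha beta.
    split.
    - by move=> xi S _; apply: l0.
    - move=> xi v; rewrite /beta oppr_le0; exact: l0.
    - move=> xi v w0; have := hcol (xi, v); rewrite col w0 rmorph0 !mulr0 addr0 /beta /alpha.
      have := l0 (inl (inl (xi, v))); lra.
  have hI := Hineq alpha beta hA.
  have hphi : \sum_(v < n | 0 < w v) phi p w alpha beta v * theta v <= \sum_v lt v * theta v.
    rewrite [X in _ <= X](bigID (fun v => 0 < w v)) /=.
    rewrite -[X in X <= _]addr0; apply: lerD; last first.
      by apply: sumr_ge0 => v _; apply: mulr_ge0; [exact: l0 | exact: th0].
    apply: ler_sum => v hv; apply: ler_wpM2r => //.
    rewrite /phi /posp ge_max l0 andbT.
    elim/big_ind: _ => [|a1 a2 h1 h2|xi _]; [exact: l0 | by rewrite ge_max h1 h2|].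
    have hpw : 0 < ratr (p xi) * ratr (w v) :> R by rewrite mulr_gt0 // ltr0q.
    rewrite ler_pdivrMr //; have := hcol (xi, v); rewrite col.
    have := l0 (inl (inl (xi, v))); rewrite /beta /alpha /lt; lra.
  have F1 : \sum_r l r * cvec x theta r = \sum_(k : Jt) l (inl (inr k)) * (b k.2)%:R
     + \sum_(q : 'I_N * {set 'I_n}) l (inr (inl q)) * cvec x theta (inr (inl q))
     + \sum_v lt v * theta v.
    have z : \sum_(k : Jt) l (inl (inl k)) * 0 = 0.
      by apply: big1 => k _; exact: mulr0.
    by rewrite !big_sumType /= z add0r !addrA.
  have F2 : \sum_(k : Jt) l (inl (inr k)) * (b k.2)%:R
     = - \sum_(xi < N) \sum_(v < n) beta xi v * (b v)%:R.
    rewrite sum_pair -sumrN; apply: eq_bigr => xi _; rewrite -sumrN.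
    by apply: eq_bigr => v _; rewrite /beta mulNr opprK.
  have F3 : \sum_(q : 'I_N * {set 'I_n}) l (inr (inl q)) * cvec x theta (inr (inl q))
     = - \sum_(xi < N) \sum_(S : {set 'I_n} | S != set0) alpha xi S * xE x S
       - \sum_(xi < N) \sum_(S : {set 'I_n} | S != set0)
           alpha xi S * ((kxi d C xi S)%:~R - #|S|%:R).
    rewrite sum_pair -!sumrN -big_split /=; apply: eq_bigr => xi _.
    rewrite -!sumrN -big_split /= [RHS]big_mkcond /=; apply: eq_bigr => S _ /=.
    by case: (S != set0) => /=; rewrite /alpha ?mulr0 //; ring.
  rewrite F1 F2 F3; move: hI hphi; rewrite /ineq /nu; lra.
have [y Hy] := @farkas R Jt Ix Amat (cvec x theta) hcert.
exists (fun xi v => y (xi, v)); split => //.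
- move=> xi v; have := Hy (inl (inl (xi, v))); have := Hy (inl (inr (xi, v))).
  rewrite row_low row_up /=; lra.
- move=> xi S hS; have := Hy (inr (inl (xi, S))); rewrite row_cov /= hS; lra.
- move=> v; have := Hy (inr (inr v)); by rewrite row_th.
Qed.

End Main.

Theorem proposition3 (R : realType) (n N : nat)
  (d : 'I_N -> 'I_n -> rat) (p : 'I_N -> rat) (C : rat)
  (w : 'I_n -> rat) (b : 'I_n -> nat) (cvrp : option nat) :
  0 < C ->
  (forall xi v, 0 <= d xi v <= C) ->
  (forall xi, 0 < p xi) ->
  \sum_(xi < N) p xi = 1 ->
  (forall v, 0 <= w v) ->
  (forall xbar : edge n -> R, Xset d p C cvrp xbar ->
     forall theta : 'I_n -> R,
       projSRI d p C w b xbar theta <->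
       ((forall v, 0 <= theta v) /\
        forall alpha beta, Aset w alpha beta ->
          ineq d p C w b xbar theta alpha beta))
  /\
  (forall (x : edge n -> R) (theta : 'I_n -> R),
     Pset d p C w b cvrp x theta <->
     [/\ Xset d p C cvrp x, (forall v, 0 <= theta v) &
         forall alpha beta, Aset w alpha beta ->
           ineq d p C w b x theta alpha beta]).
Proof.
Proof.
move=> hC hd hp hs hw.
have P1 : forall xbar : edge n -> R, Xset d p C cvrp xbar ->
     forall theta : 'I_n -> R,
       projSRI d p C w b xbar theta <->
       ((forall v, 0 <= theta v) /\
        forall alpha beta, Aset w alpha beta ->
          ineq d p C w b xbar theta alpha beta).
  move=> xbar _ theta; split.
    move=> [y Hy]; split; first by case: Hy.
    by move=> alpha beta hA; exact: (@weak R n N d p C w b hp hw xbar theta y alpha beta Hy hA).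
  by move=> [th0 H]; exact: (@strong R n N d p C w b hp xbar theta th0 H).
split => // x theta; split.
  by move=> [hX hP]; have [th0 H] := (P1 x hX theta).1 hP; split.
by move=> [hX th0 H]; split => //; apply: (P1 x hX theta).2.
Qed.
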